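(* If $T$ is any bounded linear operator on a separable Banach space $X$, then the set $FHC(T)$ of frequently hypercyclic vectors for $T$ is meager in $X$.
   Context: $x\in FHC(T)$ if for every nonempty open $V\subset X$, $\liminf_{N\to\infty}\frac1N\#\{n\in[1,N]:T^nx\in V\}>0$. *)

(* Defs.v *)
From Stdlib Require Import Reals ClassicalEpsilon.
Open Scope R_scope.

Record NormedSpace := {
  ns_car :> Type;
  ns_zero : ns_car;
  ns_add : ns_car -> ns_car -> ns_car;
  ns_opp : ns_car -> ns_car;
  ns_scal : R -> ns_car -> ns_car;
  ns_norm : ns_car -> R;
  ns_addA : forall x y z, ns_add x (ns_add y z) = ns_add (ns_add x y) z;
  ns_addC : forall x y, ns_add x y = ns_add y x;
  ns_add0 : forall x, ns_add x ns_zero = x;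
  ns_addN : forall x, ns_add x (ns_opp x) = ns_zero;
  ns_scalA : forall a b x, ns_scal a (ns_scal b x) = ns_scal (a * b) x;
  ns_scal1 : forall x, ns_scal 1 x = x;
  ns_scalDr : forall a x y, ns_scal a (ns_add x y) = ns_add (ns_scal a x) (ns_scal a y);
  ns_scalDl : forall a b x, ns_scal (a + b) x = ns_add (ns_scal a x) (ns_scal b x);
  ns_norm_eq0 : forall x, ns_norm x = 0 -> x = ns_zero;
  ns_norm0 : ns_norm ns_zero = 0;
  ns_normZ : forall a x, ns_norm (ns_scal a x) = Rabs a * ns_norm x;
  ns_normD : forall x y, ns_norm (ns_add x y) <= ns_norm x + ns_norm y
}.

Section Topology.
Variable X : NormedSpace.

Definition dist (x y : X) : R := ns_norm X (ns_add X x (ns_opp X y)).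

Definition cauchy (u : nat -> X) : Prop :=
  forall eps, 0 < eps -> exists N, forall m n, (N <= m)%nat -> (N <= n)%nat ->
    dist (u m) (u n) < eps.

Definition converges_to (u : nat -> X) (l : X) : Prop :=
  forall eps, 0 < eps -> exists N, forall n, (N <= n)%nat -> dist (u n) l < eps.

Definition complete : Prop :=
  forall u, cauchy u -> exists l, converges_to u l.

Definition separable : Prop :=
  exists d : nat -> X, forall x eps, 0 < eps -> exists n, dist x (d n) < eps.

Definition is_open (V : X -> Prop) : Prop :=
  forall x, V x -> exists eps, 0 < eps /\ forall y, dist y x < eps -> V y.

Definition closure (A : X -> Prop) (x : X) : Prop :=
  forall eps, 0 < eps -> exists y, A y /\ dist x y < eps.

Definition nowhere_dense (A : X -> Prop) : Prop :=
  forall U, is_open U -> (forall x, U x -> closure A x) -> forall x, ~ U x.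

Definition meager (A : X -> Prop) : Prop :=
  exists F : nat -> (X -> Prop),
    (forall n, nowhere_dense (F n)) /\ (forall x, A x -> exists n, F n x).

Definition bounded_linear (T : X -> X) : Prop :=
  (forall x y, T (ns_add X x y) = ns_add X (T x) (T y)) /\
  (forall a x, T (ns_scal X a x) = ns_scal X a (T x)) /\
  (exists M, forall x, ns_norm X (T x) <= M * ns_norm X x).

Fixpoint visit_count (T : X -> X) (x : X) (V : X -> Prop) (N : nat) : nat :=
  match N with
  | O => O
  | S N' => (visit_count T x V N' +
             if excluded_middle_informative (V (Nat.iter N T x)) then 1 else 0)%nat
  end.

Definition liminf_pos (u : nat -> R) : Prop :=
  exists c, 0 < c /\ exists N0, forall N, (N0 <= N)%nat -> c <= u N.

Definition FHC (T : X -> X) (x : X) : Prop :=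
  forall V, is_open V -> (exists v, V v) ->
    liminf_pos (fun N => INR (visit_count T x V N) / INR N).

End Topology.

(* Main.v *)
Require Import Defs.
From Stdlib Require Import Reals.
From Stdlib Require Import Lia Lra ClassicalEpsilon Classical.
Open Scope R_scope.
Notation dst := Defs.dist.


Lemma opp_unique (X : NormedSpace) (v w : X) :
  ns_add X v w = ns_zero X -> w = ns_opp X v.
Proof.
  intro H.
  rewrite <- (ns_add0 X w), <- (ns_addN X v), ns_addA, (ns_addC X w v), H.
  rewrite ns_addC; apply ns_add0.
Qed.

Lemma add_idem (X : NormedSpace) (u : X) : ns_add X u u = u -> u = ns_zero X.
Proof.
  intro H. transitivity (ns_add X (ns_add X u u) (ns_opp X u)).
  - rewrite <- ns_addA, ns_addN, ns_add0. reflexivity.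
  - rewrite H. apply ns_addN.
Qed.

Lemma scal_zero (X : NormedSpace) a : ns_scal X a (ns_zero X) = ns_zero X.
Proof. apply add_idem. rewrite <- ns_scalDr, ns_add0. reflexivity. Qed.

Lemma scal0 (X : NormedSpace) (x : X) : ns_scal X 0 x = ns_zero X.
Proof. apply add_idem. rewrite <- ns_scalDl, Rplus_0_l. reflexivity. Qed.

Lemma scal_opp (X : NormedSpace) a (y : X) :
  ns_scal X a (ns_opp X y) = ns_opp X (ns_scal X a y).
Proof. apply opp_unique. rewrite <- ns_scalDr, ns_addN. apply scal_zero. Qed.

Lemma opp_scal (X : NormedSpace) (x : X) : ns_opp X x = ns_scal X (-1) x.
Proof.
  symmetry; apply opp_unique.
  rewrite <- (ns_scal1 X x) at 1. rewrite <- ns_scalDl.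
  replace (1 + -1) with 0 by ring. apply scal0.
Qed.

Lemma norm_opp (X : NormedSpace) (x : X) : ns_norm X (ns_opp X x) = ns_norm X x.
Proof. rewrite opp_scal, ns_normZ. replace (Rabs (-1)) with 1. ring. rewrite Rabs_left; lra. Qed.

Lemma norm_nonneg (X : NormedSpace) (x : X) : 0 <= ns_norm X x.
Proof.
  pose proof (ns_normD X x (ns_opp X x)) as H.
  rewrite ns_addN, ns_norm0, norm_opp in H. lra.
Qed.

Lemma sub_chain (X : NormedSpace) (a b c : X) :
  ns_add X (ns_add X a (ns_opp X b)) (ns_add X b (ns_opp X c)) = ns_add X a (ns_opp X c).
Proof.
  rewrite <- ns_addA. f_equal. rewrite ns_addA, (ns_addC X (ns_opp X b) b), ns_addN.
  rewrite ns_addC; apply ns_add0.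
Qed.

Lemma dtri (X : NormedSpace) (a b c : X) : dst X a c <= dst X a b + dst X b c.
Proof. unfold dst, Defs.dist. rewrite <- (sub_chain X a b c). apply ns_normD. Qed.

Lemma dsym (X : NormedSpace) (a b : X) : dst X a b = dst X b a.
Proof.
  unfold dst, Defs.dist. rewrite <- (norm_opp X (ns_add X b (ns_opp X a))). f_equal.
  apply opp_unique. rewrite sub_chain. apply ns_addN.
Qed.

Lemma dself (X : NormedSpace) (a : X) : dst X a a = 0.
Proof. unfold dst, Defs.dist. rewrite ns_addN. apply ns_norm0. Qed.

Lemma norm_le_dist (X : NormedSpace) (w c : X) : ns_norm X w <= dst X w c + ns_norm X c.
Proof.
  unfold dst, Defs.dist. rewrite <- (ns_normD X). right. f_equal.
  rewrite <- ns_addA, (ns_addC X (ns_opp X c) c), ns_addN, ns_add0. reflexivity.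
Qed.

Lemma dscal (X : NormedSpace) a (x y : X) :
  dst X (ns_scal X a x) (ns_scal X a y) = Rabs a * dst X x y.
Proof. unfold dst, Defs.dist. rewrite <- scal_opp, <- ns_scalDr, ns_normZ. reflexivity. Qed.

Lemma iter_add_l (X : NormedSpace) (T : X -> X)
  (Ha : forall x y, T (ns_add X x y) = ns_add X (T x) (T y)) j x y :
  Nat.iter j T (ns_add X x y) = ns_add X (Nat.iter j T x) (Nat.iter j T y).
Proof. induction j; simpl; [reflexivity|]. rewrite IHj. apply Ha. Qed.

Lemma iter_scal (X : NormedSpace) (T : X -> X)
  (Hs : forall a x, T (ns_scal X a x) = ns_scal X a (T x)) j a x :
  Nat.iter j T (ns_scal X a x) = ns_scal X a (Nat.iter j T x).
Proof. induction j; simpl; [reflexivity|]. rewrite IHj. apply Hs. Qed.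

Lemma iter_dist (X : NormedSpace) (T : X -> X) (M : R) (HM : 0 < M)
  (Ha : forall x y, T (ns_add X x y) = ns_add X (T x) (T y))
  (Hs : forall a x, T (ns_scal X a x) = ns_scal X a (T x))
  (Hb : forall x, ns_norm X (T x) <= M * ns_norm X x) j x y :
  dst X (Nat.iter j T x) (Nat.iter j T y) <= M ^ j * dst X x y.
Proof.
  unfold Defs.dist.
  rewrite opp_scal, <- iter_scal, <- iter_add_l by assumption.
  rewrite <- opp_scal. generalize (ns_add X x (ns_opp X y)) as v. intro v.
  induction j; simpl. lra.
  eapply Rle_trans. apply Hb. rewrite Rmult_assoc. apply Rmult_le_compat_l; lra.
Qed.

Definition indc (P : Prop) : nat := if excluded_middle_informative P then 1%nat else 0%nat.

Lemma vc_S (X : NormedSpace) T (x : X) V N :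
  visit_count X T x V (S N) = (visit_count X T x V N + indc (V (Nat.iter (S N) T x)))%nat.
Proof. reflexivity. Qed.

Lemma ind_le (P Q : Prop) : (P -> Q) -> (indc P <= indc Q)%nat.
Proof.
  unfold indc; intro H; destruct (excluded_middle_informative P);
  destruct (excluded_middle_informative Q); intuition lia.
Qed.

Lemma ind_le1 (P : Prop) : (indc P <= 1)%nat.
Proof. unfold indc; destruct (excluded_middle_informative P); lia. Qed.

Lemma vc_mono (X : NormedSpace) T (x : X) (P Q : X -> Prop) N :
  (forall z, P z -> Q z) -> (visit_count X T x P N <= visit_count X T x Q N)%nat.
Proof.
  intro H; induction N; [simpl; lia|]. rewrite !vc_S.
  pose proof (ind_le (P (Nat.iter (S N) T x)) (Q (Nat.iter (S N) T x)) (H _)). lia.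
Qed.

Lemma vc_le (X : NormedSpace) T (x : X) P N : (visit_count X T x P N <= N)%nat.
Proof.
  induction N; [simpl; lia|]. rewrite vc_S. pose proof (ind_le1 (P (Nat.iter (S N) T x))). lia.
Qed.

Lemma vc_ext (X : NormedSpace) T (x y : X) (P Q : X -> Prop) N :
  (forall j, P (Nat.iter j T x) <-> Q (Nat.iter j T y)) ->
  visit_count X T x P N = visit_count X T y Q N.
Proof.
  intro H; induction N; [reflexivity|]. rewrite !vc_S, IHN. f_equal.
  apply Nat.le_antisymm; apply ind_le; apply H.
Qed.

Lemma vc_shift (X : NormedSpace) T (x : X) P N e :
  visit_count X T x P (N + e) = (visit_count X T x P e + visit_count X T (Nat.iter e T x) P N)%nat.
Proof.
  induction N. simpl. lia.
  change (S N + e)%nat with (S (N + e)). rewrite !vc_S, IHN, <- Nat.iter_add.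
  change (S N + e)%nat with (S (N + e)). lia.
Qed.

Lemma vc_pos (X : NormedSpace) T (x : X) P N :
  (0 < visit_count X T x P N)%nat -> exists j, P (Nat.iter j T x).
Proof.
  induction N; simpl; [lia|]. unfold indc.
  destruct (excluded_middle_informative (P (T (Nat.iter N T x)))) as [Hp|Hp].
  - intros _. exists (S N). exact Hp.
  - intro; apply IHN; lia.
Qed.

Fixpoint sumto (f : nat -> nat) (k : nat) : nat :=
  match k with O => f O | S k' => (sumto f k' + f (S k'))%nat end.

Lemma sumto_zero (f : nat -> nat) k : (forall i, (i <= k)%nat -> f i = O) -> sumto f k = O.
Proof. induction k; simpl; intro H. apply H; lia. rewrite IHk, H; auto. Qed.

Lemma ind_sum (P : nat -> Prop) k :
  (forall i j, (i <= k)%nat -> (j <= k)%nat -> i <> j -> P i -> P j -> False) ->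
  (sumto (fun i => indc (P i)) k <= 1)%nat.
Proof.
  induction k; simpl; intro H. apply ind_le1.
  unfold indc at 2. destruct (excluded_middle_informative (P (S k))) as [Hp|Hp].
  - rewrite sumto_zero. lia. intros i Hi. unfold indc.
    destruct (excluded_middle_informative (P i)); auto.
    exfalso; apply (H i (S k)); auto; lia.
  - rewrite Nat.add_0_r. apply IHk. intros i j Hi Hj; apply H; lia.
Qed.

Lemma sumto_add f g k : sumto (fun i => f i + g i)%nat k = (sumto f k + sumto g k)%nat.
Proof. induction k; simpl; [reflexivity|]. rewrite IHk; lia. Qed.

Lemma sum_disj (X : NormedSpace) T (x : X) (D : nat -> X -> Prop) k L :
  (forall i j y, (i <= k)%nat -> (j <= k)%nat -> i <> j -> D i y -> D j y -> False) ->
  (sumto (fun i => visit_count X T x (D i) L) k <= L)%nat.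
Proof.
  intro H. induction L. simpl. rewrite sumto_zero; auto.
  transitivity (sumto (fun i => visit_count X T x (D i) L + indc (D i (Nat.iter (S L) T x)))%nat k).
  - apply Nat.eq_le_incl. f_equal.
  - rewrite sumto_add.
    pose proof (ind_sum (fun i => D i (Nat.iter (S L) T x)) k) as Hs.
    assert (sumto (fun i => indc (D i (Nat.iter (S L) T x))) k <= 1)%nat.
    { apply Hs. intros i j Hi Hj Hij; apply (H i j); auto. }
    lia.
Qed.

Lemma sum_lower (f : nat -> nat) a k :
  (forall i, (i <= k)%nat -> (a <= f i)%nat) -> (S k * a <= sumto f k)%nat.
Proof.
  induction k; simpl; intro H. specialize (H O); lia.
  assert (a <= f (S k))%nat by (apply H; lia).
  assert (S k * a <= sumto f k)%nat by (apply IHk; intros; apply H; lia). simpl in *. lia.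
Qed.

Definition Aset (X : NormedSpace) T (C : X -> Prop) (m : nat) (x : X) : Prop :=
  forall N, (m <= N)%nat -> (N <= m * visit_count X T x C N)%nat.

Lemma count_nbhd (X : NormedSpace) (T : X -> X) (M : R) (HM : 0 < M)
  (Hit : forall j x y, dst X (Nat.iter j T x) (Nat.iter j T y) <= M ^ j * dst X x y)
  (C : X -> Prop)
  (HC : forall z, ~ C z -> exists eps, 0 < eps /\ forall w, dst X w z < eps -> ~ C w) :
  forall N x, exists eps, 0 < eps /\ forall y, dst X x y < eps ->
     (visit_count X T y C N <= visit_count X T x C N)%nat.
Proof.
  induction N; intro x.
  - exists 1; split; [lra|]; intros; simpl; lia.
  - destruct (IHN x) as [e1 [He1 H1]].
    destruct (classic (C (Nat.iter (S N) T x))) as [Hc|Hc].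
    + exists e1; split; auto; intros y Hy. rewrite !vc_S.
      specialize (H1 y Hy). pose proof (ind_le1 (C (Nat.iter (S N) T y))).
      unfold indc at 2; destruct (excluded_middle_informative (C (Nat.iter (S N) T x))); [lia|tauto].
    + destruct (HC _ Hc) as [e2 [He2 H2]].
      assert (Hp : 0 < M ^ S N) by (apply pow_lt; lra).
      exists (Rmin e1 (e2 / M ^ S N)); split.
      { apply Rmin_pos; auto. apply Rdiv_lt_0_compat; auto. }
      intros y Hy. rewrite !vc_S.
      assert (Hy1 : dst X x y < e1) by (eapply Rlt_le_trans; [exact Hy| apply Rmin_l]).
      assert (Hy2 : dst X x y < e2 / M ^ S N) by (eapply Rlt_le_trans; [exact Hy| apply Rmin_r]).
      specialize (H1 y Hy1).
      assert (~ C (Nat.iter (S N) T y)).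
      { apply H2. eapply Rle_lt_trans. apply Hit. rewrite dsym.
        apply Rmult_lt_reg_l with (/ M ^ S N). apply Rinv_0_lt_compat; auto.
        rewrite <- Rmult_assoc, Rinv_l, Rmult_1_l by lra.
        rewrite Rmult_comm. exact Hy2. }
      unfold indc. destruct (excluded_middle_informative (C (Nat.iter (S N) T y))); [tauto|].
      lia.
Qed.

Lemma closed_A (X : NormedSpace) (T : X -> X) (M : R) (HM : 0 < M)
  (Hit : forall j x y, dst X (Nat.iter j T x) (Nat.iter j T y) <= M ^ j * dst X x y)
  (C : X -> Prop)
  (HC : forall z, ~ C z -> exists eps, 0 < eps /\ forall w, dst X w z < eps -> ~ C w) m x :
  closure X (Aset X T C m) x -> Aset X T C m x.
Proof.
  intros Hcl N HN.
  destruct (count_nbhd X T M HM Hit C HC N x) as [e [He H]].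
  destruct (Hcl e He) as [y [Ay Hy]].
  specialize (H y Hy). specialize (Ay N HN).
  eapply Nat.le_trans; [exact Ay|]. apply Nat.mul_le_mono_l; exact H.
Qed.

Lemma pow4_ge (i d : nat) : 4 * 4 ^ i <= 4 ^ (i + S d).
Proof.
  rewrite pow_add. simpl. assert (1 <= 4 ^ d) by (apply pow_R1_Rle; lra).
  assert (0 < 4 ^ i) by (apply pow_lt; lra). nra.
Qed.

Lemma D_disj (X : NormedSpace) (c : X) (Hc : 0 < ns_norm X c) i j (y : X) :
  (i < j)%nat ->
  dst X (ns_scal X (/ 4 ^ i) y) c <= ns_norm X c / 2 ->
  dst X (ns_scal X (/ 4 ^ j) y) c <= ns_norm X c / 2 -> False.
Proof.
  intros Hij Hi Hj.
  pose proof (norm_le_dist X (ns_scal X (/ 4 ^ i) y) c) as A1.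
  pose proof (norm_le_dist X c (ns_scal X (/ 4 ^ j) y)) as A2.
  rewrite dsym in A2.
  rewrite ns_normZ in A1, A2.
  assert (P1 : 0 < 4 ^ i) by (apply pow_lt; lra).
  assert (P2 : 0 < 4 ^ j) by (apply pow_lt; lra).
  rewrite Rabs_right in A1 by (left; apply Rinv_0_lt_compat; lra).
  rewrite Rabs_right in A2 by (left; apply Rinv_0_lt_compat; lra).
  set (s := ns_norm X y) in *. set (p := ns_norm X c) in *.
  assert (B1 : s <= 3 * p / 2 * 4 ^ i).
  { apply Rmult_le_reg_l with (/ 4 ^ i). apply Rinv_0_lt_compat; lra.
    replace (/ 4 ^ i * (3 * p / 2 * 4 ^ i)) with (3 * p / 2) by (field; lra). lra. }
  assert (B2 : p / 2 * 4 ^ j <= s).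
  { apply Rmult_le_reg_l with (/ 4 ^ j). apply Rinv_0_lt_compat; lra.
    replace (/ 4 ^ j * (p / 2 * 4 ^ j)) with (p / 2) by (field; lra). lra. }
  destruct (Nat.le_exists_sub (S i) j Hij) as [d [Hd _]].
  assert (4 * 4 ^ i <= 4 ^ j) by (subst j; replace (d + S i)%nat with (i + S d)%nat by lia; apply pow4_ge).
  nra.
Qed.

Lemma sumto_mul m f k : sumto (fun i => m * f i)%nat k = (m * sumto f k)%nat.
Proof. induction k; simpl; [reflexivity|]. rewrite IHk; lia. Qed.

Lemma finite_visits (P : nat -> nat -> Prop) k :
  (forall i, exists e, P i e) -> exists E, forall i, (i <= k)%nat -> exists e, (e <= E)%nat /\ P i e.
Proof.
  intro H. induction k.
  - destruct (H O) as [e He]. exists e. intros i Hi. replace i with O by lia. eauto.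
  - destruct IHk as [E HE]. destruct (H (S k)) as [e He]. exists (Nat.max E e).
    intros i Hi. destruct (Nat.eq_dec i (S k)).
    + subst; exists e; split; [lia|auto].
    + destruct (HE i ltac:(lia)) as [e' [He' Pe']]. exists e'; split; [lia|auto].
Qed.

Lemma main_contra (X : NormedSpace) (T : X -> X)
  (Ha : forall x y, T (ns_add X x y) = ns_add X (T x) (T y))
  (Hs : forall a x, T (ns_scal X a x) = ns_scal X a (T x))
  (M : R) (HM : 0 < M)
  (Hit : forall j x y, dst X (Nat.iter j T x) (Nat.iter j T y) <= M ^ j * dst X x y)
  (c : X) (Hc : 0 < ns_norm X c) (x0 : X)
  (Hvis : forall O, is_open X O -> (exists v, O v) -> exists e, O (Nat.iter e T x0))
  (m : nat) (U : X -> Prop) (HU : is_open X U)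
  (Hsub : forall x, U x -> closure X (Aset X T (fun z => dst X z c <= ns_norm X c / 2) m) x)
  (u : X) (Hu : U u) : False.
Proof.
  set (C := fun z => dst X z c <= ns_norm X c / 2) in *.
  assert (HC : forall z, ~ C z -> exists eps, 0 < eps /\ forall w, dst X w z < eps -> ~ C w).
  { intros z Hz. unfold C in Hz. exists (dst X z c - ns_norm X c / 2). split. lra.
    intros w Hw HCw. unfold C in HCw. pose proof (dtri X z w c). rewrite dsym in Hw. lra. }
  set (O i := fun y => U (ns_scal X (/ 4 ^ i) y)).
  assert (Hvi : forall i, exists e, O i (Nat.iter e T x0)).
  { intro i. assert (P1 : 0 < 4 ^ i) by (apply pow_lt; lra). apply Hvis.
    - intros y Hy. destruct (HU _ Hy) as [eps [He Heps]].
      exists (eps * 4 ^ i). split. nra.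
      intros w Hw. unfold O. apply Heps. rewrite dscal.
      rewrite Rabs_right by (left; apply Rinv_0_lt_compat; lra).
      apply Rmult_lt_reg_l with (4 ^ i); auto.
      rewrite <- Rmult_assoc, Rinv_r, Rmult_1_l by lra. lra.
    - exists (ns_scal X (4 ^ i) u). unfold O. rewrite ns_scalA, Rinv_l, ns_scal1 by lra. exact Hu. }
  destruct (finite_visits (fun i e => O i (Nat.iter e T x0)) m Hvi) as [E HE].
  set (L := (S m * E + S m)%nat).
  set (D i := fun y => C (ns_scal X (/ 4 ^ i) y)).
  set (S_ i := visit_count X T x0 (D i) L).
  assert (Hlow : forall i, (i <= m)%nat -> (L - E <= m * S_ i)%nat).
  { intros i Hi. destruct (HE i Hi) as [e [He Oe]].
    set (z := ns_scal X (/ 4 ^ i) (Nat.iter e T x0)).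
    assert (Az : Aset X T C m z).
    { apply (closed_A X T M HM Hit C HC). apply Hsub. exact Oe. }
    specialize (Az (L - e)%nat ltac:(unfold L; nia)).
    assert (Heq : visit_count X T z C (L - e) = visit_count X T (Nat.iter e T x0) (D i) (L - e)).
    { apply vc_ext. intro j. unfold z, D. rewrite iter_scal by exact Hs. tauto. }
    pose proof (vc_shift X T x0 (D i) (L - e) e) as Hsh.
    replace (L - e + e)%nat with L in Hsh by (unfold L; nia).
    unfold S_. rewrite Hsh. rewrite Heq in Az. nia. }
  pose proof (sum_lower (fun i => m * S_ i)%nat (L - E) m Hlow) as H1.
  rewrite sumto_mul in H1.
  assert (H2 : (sumto S_ m <= L)%nat).
  { apply sum_disj. intros i j y Hi Hj Hij Di Dj.
    destruct (Nat.lt_total i j) as [Hl|[Hl|Hl]].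
    - exact (D_disj X c Hc i j y Hl Di Dj).
    - lia.
    - exact (D_disj X c Hc j i y Hl Dj Di). }
  assert (H3 : (S m * (L - E) <= m * L)%nat) by nia.
  unfold L in H3. nia.
Qed.

Lemma cover (X : NormedSpace) (T : X -> X) (c : X) (Hc : 0 < ns_norm X c) x :
  FHC X T x -> exists n, Aset X T (fun z => dst X z c <= ns_norm X c / 2) n x.
Proof.
  intro Hx.
  set (V := fun z => dst X z c < ns_norm X c / 2).
  assert (HV : is_open X V).
  { intros y Hy. exists (ns_norm X c / 2 - dst X y c). split. unfold V in Hy; lra.
    intros w Hw. unfold V. pose proof (dtri X w y c). lra. }
  assert (HVn : exists v, V v) by (exists c; unfold V; rewrite dself; lra).
  destruct (Hx V HV HVn) as [cc [Hcc [N0 HN0]]].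
  destruct (INR_archimed cc 1 Hcc) as [k Hk].
  exists (Nat.max k (Nat.max N0 1)). intros N HN.
  specialize (HN0 N ltac:(lia)).
  assert (HNp : 0 < INR N) by (apply lt_0_INR; lia).
  assert (H1 : cc * INR N <= INR (visit_count X T x V N)).
  { apply Rmult_le_reg_r with (/ INR N). apply Rinv_0_lt_compat; auto.
    rewrite Rmult_assoc, Rinv_r, Rmult_1_r by lra. exact HN0. }
  set (C := fun z => dst X z c <= ns_norm X c / 2).
  assert (H2 : (visit_count X T x V N <= visit_count X T x C N)%nat).
  { apply vc_mono. intros z Hz; unfold V in Hz; unfold C; lra. }
  apply le_INR in H2.
  assert (H3 : INR k <= INR (Nat.max k (Nat.max N0 1))) by (apply le_INR; lia).
  assert (H4 : 0 <= INR (visit_count X T x V N)) by apply pos_INR.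
  assert (INR N < INR (Nat.max k (Nat.max N0 1) * visit_count X T x C N)).
  { rewrite mult_INR.
    assert (INR N < INR k * cc * INR N) by nra.
    assert (INR k * cc * INR N <= INR k * INR (visit_count X T x V N)).
    { rewrite Rmult_assoc. apply Rmult_le_compat_l; [apply pos_INR|lra]. }
    assert (INR k * INR (visit_count X T x V N) <= INR (Nat.max k (Nat.max N0 1)) * INR (visit_count X T x C N)).
    { apply Rmult_le_compat; auto; apply pos_INR. }
    lra. }
  apply INR_lt in H. lia.
Qed.

Theorem proposition4 (X : NormedSpace)
  (HX : complete X) (Hsep : separable X) (Hnontriv : exists x : X, x <> ns_zero X)
  (T : X -> X) (HT : bounded_linear X T) :
  meager X (FHC X T).
Proof.
  destruct HT as [Ha [Hs [M0 Hb]]].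
  destruct Hnontriv as [c Hc0].
  assert (Hc : 0 < ns_norm X c).
  { destruct (norm_nonneg X c) as [H|H]; auto. exfalso; apply Hc0, ns_norm_eq0; auto. }
  set (M := Rabs M0 + 1).
  assert (HM : 0 < M) by (unfold M; pose proof (Rabs_pos M0); lra).
  assert (Hb' : forall x, ns_norm X (T x) <= M * ns_norm X x).
  { intro x. eapply Rle_trans. apply Hb. pose proof (norm_nonneg X x).
    pose proof (Rle_abs M0). unfold M. nra. }
  pose proof (iter_dist X T M HM Ha Hs Hb') as Hit.
  destruct (classic (exists x0, FHC X T x0)) as [[x0 Hx0]|Hno].
  - exists (fun n => Aset X T (fun z => dst X z c <= ns_norm X c / 2) n). split.
    + intros n U HU Hsub u Hu.
      refine (main_contra X T Ha Hs M HM Hit c Hc x0 _ n U HU Hsub u Hu).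
      intros O HO HOn. destruct (Hx0 O HO HOn) as [cc [Hcc [N0 HN0]]].
      specialize (HN0 (S N0) ltac:(lia)).
      apply (vc_pos X T x0 O (S N0)).
      destruct (visit_count X T x0 O (S N0)) eqn:E; [|lia].
      exfalso. simpl in HN0. unfold Rdiv in HN0. rewrite Rmult_0_l in HN0. lra.
    + intros x Hx. apply cover; auto.
  - exists (fun _ _ => False). split.
    + intros n U HU Hsub x Hx. destruct (Hsub x Hx 1 Rlt_0_1) as [y [[] _]].
    + intros x Hx. exfalso; eauto.
Qed.
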